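(* The exponential $f(u)$ of the general elliptic formal group law $F_\mu$ is a Hurwitz series over $E=\mathbb{Z}[\mu_1,\mu_2,\mu_3,\mu_4,\mu_6]$, i.e. $f(u)=\sum_{k\ge0}\varphi_k\frac{u^k}{k!}$ with all $\varphi_k\in E$.
   Context: Let $\mu_1,\mu_2,\mu_3,\mu_4,\mu_6$ be independent indeterminates, $E=\mathbb{Z}[\mu_1,\dots,\mu_6]$. On the cubic $Y^2Z+\mu_1XYZ+\mu_3YZ^2=X^3+\mu_2X^2Z+\mu_4XZ^2+\mu_6Z^3$ with chord-tangent group law (neutral element $O=(0:1:0)$, three collinear points sum to zero), use Tate coordinates $t=-X/Y$, $s=-Z/Y$: the curve is $s=t^3+\mu_1ts+\mu_2t^2s+\mu_3s^2+\mu_4ts^2+\mu_6s^3$ with $s(t)$ the power series solution with $s(0)=0$. The general elliptic formal group law $F_\mu(t_1,t_2)\in E[[t_1,t_2]]$ gives the $t$-coordinate of $P_1+P_2$ for $P_i=(t_i,s(t_i))$. Its exponential is the unique $f\in(E\otimes\mathbb{Q})[[u]]$ with $f(0)=0$, $f'(0)=1$, $f(u+v)=F_\mu(f(u),f(v))$. *)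

(* Defs.v *)
From HB Require Import structures.
From mathcomp Require Import all_boot all_order all_algebra.
From mathcomp Require Import mpoly.

Set Implicit Arguments.
Unset Strict Implicit.
Unset Printing Implicit Defensive.

Import Order.TTheory GRing.Theory Num.Theory.
Local Open Scope ring_scope.

(* Formal power series, represented by their coefficient functions.   *)
(*   ser R  : R[[t]]      (a n  = coefficient of t^n)                  *)
(*   ser2 R : R[[t1,t2]]  (a i j = coefficient of t1^i t2^j)           *)
Definition ser (R : Type) := nat -> R.
Definition ser2 (R : Type) := nat -> nat -> R.

Section Series.
Variable R : comNzRingType.

Definition sone : ser R := fun n => (n == 0%N)%:R.
Definition smul (a b : ser R) : ser R :=
  fun n => \sum_(k < n.+1) a k * b (n - k)%N.
Definition spow (a : ser R) (m : nat) : ser R := iter m (smul a) sone.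

Definition s2const (c : R) : ser2 R :=
  fun i j => if (i == 0%N) && (j == 0%N) then c else 0.
Definition s2one : ser2 R := s2const 1.
Definition s2add (a b : ser2 R) : ser2 R := fun i j => a i j + b i j.
Definition s2opp (a : ser2 R) : ser2 R := fun i j => - a i j.
Definition s2sub (a b : ser2 R) : ser2 R := fun i j => a i j - b i j.
Definition s2scale (c : R) (a : ser2 R) : ser2 R := fun i j => c * a i j.
Definition s2mul (a b : ser2 R) : ser2 R :=
  fun i j => \sum_(p < i.+1) \sum_(q < j.+1) a p q * b (i - p)%N (j - q)%N.
Definition s2pow (a : ser2 R) (m : nat) : ser2 R := iter m (s2mul a) s2one.

(* Multiplicative inverse of a series with constant term 1:
   1/a = sum_n (1 - a)^n, and (1-a)^n has no terms of total degree < n. *)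
Definition s2inv1 (a : ser2 R) : ser2 R :=
  fun i j => \sum_(n < (i + j).+1) s2pow (s2sub s2one a) n i j.

Definition T1 : ser2 R := fun i j => ((i == 1%N) && (j == 0%N))%:R.
Definition T2 : ser2 R := fun i j => ((i == 0%N) && (j == 1%N))%:R.

(* g(u+v) as a series in u, v *)
Definition ser_add_arg (g : ser R) : ser2 R :=
  fun i j => 'C(i + j, i)%:R * g (i + j)%N.

(* Composition G(g(u), h(v)) for g, h with zero constant term
   (then (g^a)_i = 0 for a > i, so the sum below is the full one). *)
Definition s2comp (G : ser2 R) (g h : ser R) : ser2 R :=
  fun i j => \sum_(a < i.+1) \sum_(b < j.+1) G a b * spow g a i * spow h b j.

End Series.

Arguments sone {R}.
Arguments s2one {R}.
Arguments s2const {R}.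
Arguments T1 {R}.
Arguments T2 {R}.

(* EQ = E (x) Q = Q[mu1,...,mu6] = {mpoly rat[5]}                      *)
Definition EZ := {mpoly int[5]}.
Definition EQ := {mpoly rat[5]}.

Definition mu1 : EQ := 'X_(@Ordinal 5 0 isT).
Definition mu2 : EQ := 'X_(@Ordinal 5 1 isT).
Definition mu3 : EQ := 'X_(@Ordinal 5 2 isT).
Definition mu4 : EQ := 'X_(@Ordinal 5 3 isT).
Definition mu6 : EQ := 'X_(@Ordinal 5 4 isT).

Definition EZ_to_EQ (p : EZ) : EQ := map_mpoly (fun z : int => z%:~R) p.

Definition tser : ser EQ := fun n => (n == 1%N)%:R.
Definition is_tate_s (s : ser EQ) : Prop :=
  s 0%N = 0 /\
  forall n, s n =
    spow tser 3 n
    + mu1 * smul tser s n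
    + mu2 * smul (spow tser 2) s n
    + mu3 * spow s 2 n
    + mu4 * smul tser (spow s 2) n
    + mu6 * spow s 3 n.

Section FGL.
Variable s : ser EQ.

(* slope of the chord through P1 = (t1,s(t1)), P2 = (t2,s(t2)):
   lambda = (s(t2)-s(t1))/(t2-t1) = sum_n s_n sum_{a+b=n-1} t1^a t2^b *)
Definition lam : ser2 EQ := fun i j => s (i + j).+1.
(* intercept nu = s(t1) - lambda t1 *)
Definition nu : ser2 EQ :=
  fun i j => (j == 0%N)%:R * s i - (if i is i'.+1 then lam i' j else 0).

(* substituting s = lambda t + nu in the cubic gives
   A t^3 + B t^2 + ... = 0 with *)
Definition cubA : ser2 EQ :=
  s2add s2one (s2add (s2scale mu2 lam)
    (s2add (s2scale mu4 (s2pow lam 2)) (s2scale mu6 (s2pow lam 3)))).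
Definition cubB : ser2 EQ :=
  s2add (s2scale mu1 lam) (s2add (s2scale mu3 (s2pow lam 2))
   (s2add (s2scale mu2 nu) (s2add (s2scale (2%:R * mu4) (s2mul lam nu))
     (s2scale (3%:R * mu6) (s2mul (s2pow lam 2) nu))))).

(* third intersection point P3 = (t3, s3): t1 + t2 + t3 = - B / A *)
Definition t3 : ser2 EQ :=
  s2sub (s2opp (s2add T1 T2)) (s2mul cubB (s2inv1 cubA)).
Definition s3 : ser2 EQ := s2add (s2mul lam t3) nu.

(* P1 + P2 = -P3; in projective coords P3 = (t3 : -1 : s3) and
   -(X:Y:Z) = (X : -Y - mu1 X - mu3 Z : Z), so the t-coordinate of
   P1 + P2 is  -t3 / (1 - mu1 t3 - mu3 s3). *)
Definition F_mu : ser2 EQ :=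
  s2mul (s2opp t3)
    (s2inv1 (s2sub s2one (s2add (s2scale mu1 t3) (s2scale mu3 s3)))).

End FGL.

Definition is_exponential (F : ser2 EQ) (f : ser EQ) : Prop :=
  f 0%N = 0 /\ f 1%N = 1 /\
  forall i j, ser_add_arg f i j = s2comp F f f i j.

(* Main.v *)
Require Import Defs.
From HB Require Import structures.
From mathcomp Require Import all_boot all_order all_algebra.
From mathcomp Require Import mpoly.

Import GRing.Theory.
Local Open Scope ring_scope.

Definition isZ (x : EQ) := exists q : EZ, x = EZ_to_EQ q.

Lemma isZ0 : isZ 0. Proof. by exists 0; rewrite /EZ_to_EQ raddf0. Qed.
Lemma isZ1 : isZ 1. Proof. by exists 1; rewrite /EZ_to_EQ rmorph1. Qed.
Lemma isZD x y : isZ x -> isZ y -> isZ (x + y).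
Proof. by move=> [p ->] [q ->]; exists (p + q); rewrite /EZ_to_EQ raddfD. Qed.
Lemma isZN x : isZ x -> isZ (- x).
Proof. by move=> [p ->]; exists (- p); rewrite /EZ_to_EQ raddfN. Qed.
Lemma isZB x y : isZ x -> isZ y -> isZ (x - y).
Proof. by move=> hx hy; apply: isZD => //; apply: isZN. Qed.
Lemma isZM x y : isZ x -> isZ y -> isZ (x * y).
Proof. by move=> [p ->] [q ->]; exists (p * q); rewrite /EZ_to_EQ rmorphM. Qed.
Lemma isZn n : isZ n%:R.
Proof. by exists n%:R; rewrite /EZ_to_EQ rmorph_nat. Qed.
Lemma isZsum n (F : 'I_n -> EQ) : (forall i, isZ (F i)) -> isZ (\sum_(i < n) F i).
Proof.
move=> H; apply: (big_ind isZ) => //; [exact: isZ0 | exact: isZD].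
Qed.
Lemma isZX i : isZ 'X_i.
Proof. by exists 'X_i; rewrite /EZ_to_EQ /map_mpoly mmapX mmap1U. Qed.

Lemma smul0 (a b : ser EQ) : smul a b 0 = a 0%N * b 0%N.
Proof. by rewrite /smul big_ord1 subnn. Qed.

Lemma smul_full (a b : ser EQ) n :
  (forall k, (k <= n)%N -> isZ (a k)) -> (forall k, (k <= n)%N -> isZ (b k)) ->
  isZ (smul a b n).
Proof.
move=> ha hb; apply: isZsum => k; apply: isZM.
  by apply: ha; rewrite -ltnS.
by apply: hb; rewrite leq_subr.
Qed.

Lemma smul_both (a b : ser EQ) n : a 0%N = 0 -> b 0%N = 0 ->
  (forall k, (k < n)%N -> isZ (a k)) -> (forall k, (k < n)%N -> isZ (b k)) ->
  isZ (smul a b n).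
Proof.
move=> a0 b0 ha hb; apply: isZsum => -[k hk] /=.
case: k hk => [|k] hk; first by rewrite a0 mul0r; exact: isZ0.
have [->|hne] := eqVneq k.+1 n.
  by rewrite subnn b0 mulr0; exact: isZ0.
apply: isZM; first by apply: ha; rewrite ltn_neqAle hne -ltnS.
apply: hb; rewrite ltn_subrL /=; exact: leq_ltn_trans (leq0n k) hk.
Qed.

Lemma isZ_sone k : isZ ((@sone EQ) k).
Proof. exact: isZn. Qed.

Lemma spow_full (a : ser EQ) m n :
  (forall k, (k <= n)%N -> isZ (a k)) -> isZ (spow a m n).
Proof.
move=> ha; elim: m n ha => [|m IH] n ha /=; first exact: isZ_sone.
apply: smul_full => // k kn; apply: IH => j jk; apply: ha; exact: leq_trans jk kn.
Qed.

Lemma spowS (a : ser EQ) m : spow a m.+1 = smul a (spow a m).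
Proof. by []. Qed.

Lemma s_int (s : ser EQ) : is_tate_s s -> forall k, isZ (s k).
Proof.
move=> [s0 hs].
suff H : forall n k, (k < n)%N -> isZ (s k) by move=> k; apply: (H k.+1).
elim=> [|n IH] k //.
rewrite ltnS leq_eqVlt => /orP [/eqP ->|]; last exact: IH.
have tZ : forall k, isZ (tser k) by move=> j; exact: isZn.
have t0 : tser 0 = 0 by rewrite /tser.
have ss0 : spow s 2 0 = 0 by rewrite spowS smul0 s0 mul0r.
have s2Z : forall k, (k < n)%N -> isZ (spow s 2 k).
  move=> j jn; apply: spow_full => i ij; apply: IH; exact: leq_ltn_trans ij jn.
case: n IH s2Z => [|n] IH s2Z; first by rewrite s0; exact: isZ0.
rewrite hs.
apply: isZD; [apply: isZD; [apply: isZD; [apply: isZD; [apply: isZD|]|]|]|].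
- apply: spow_full => j _; exact: tZ.
- apply: isZM; first exact: isZX.
  apply: smul_both; [exact: t0|exact: s0|move=> j _; exact: tZ|exact: IH].
- apply: isZM; first exact: isZX.
  apply: smul_both; [by rewrite spowS smul0 t0 mul0r|exact: s0| |exact: IH].
  move=> j _; apply: spow_full => i _; exact: tZ.
- apply: isZM; first exact: isZX.
  rewrite spowS; apply: smul_both; [exact: s0|by rewrite spowS smul0 s0 mul0r|exact: IH|].
  move=> j jn; apply: smul_full => i ij; last exact: isZ_sone.
  apply: IH; exact: leq_ltn_trans ij jn.
- apply: isZM; first exact: isZX.
  apply: smul_both; [exact: t0|exact: ss0|move=> j _; exact: tZ|exact: s2Z].
- apply: isZM; first exact: isZX.
  rewrite spowS; apply: smul_both; [exact: s0|exact: ss0|exact: IH|exact: s2Z].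
Qed.

Definition Z2 (a : ser2 EQ) := forall i j, isZ (a i j).

Lemma Z2const c : isZ c -> Z2 (s2const c).
Proof. move=> hc i j; rewrite /s2const; case: ifP => _; [exact: hc|exact: isZ0]. Qed.
Lemma Z2one : Z2 s2one.
Proof. rewrite /s2one; apply: Z2const; exact: isZ1. Qed.
Lemma Z2add a b : Z2 a -> Z2 b -> Z2 (s2add a b).
Proof. move=> ha hb i j; exact: isZD. Qed.
Lemma Z2opp a : Z2 a -> Z2 (s2opp a).
Proof. move=> ha i j; exact: isZN. Qed.
Lemma Z2sub a b : Z2 a -> Z2 b -> Z2 (s2sub a b).
Proof. move=> ha hb i j; exact: isZB. Qed.
Lemma Z2scale c a : isZ c -> Z2 a -> Z2 (s2scale c a).
Proof. move=> hc ha i j; exact: isZM. Qed.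
Lemma Z2mul a b : Z2 a -> Z2 b -> Z2 (s2mul a b).
Proof.
move=> ha hb i j; apply: isZsum => p; apply: isZsum => q; exact: isZM.
Qed.
Lemma Z2pow a m : Z2 a -> Z2 (s2pow a m).
Proof.
move=> ha; elim: m => [|m IH]; first exact: Z2one.
exact: Z2mul.
Qed.
Lemma Z2inv1 a : Z2 a -> Z2 (s2inv1 a).
Proof.
move=> ha i j; apply: isZsum => n; apply: Z2pow; apply: Z2sub => //; exact: Z2one.
Qed.
Lemma Z2T1 : Z2 (@T1 EQ). Proof. move=> i j; exact: isZn. Qed.
Lemma Z2T2 : Z2 (@T2 EQ). Proof. move=> i j; exact: isZn. Qed.

Section FZ.
Variable s : ser EQ.
Hypothesis sZ : forall k, isZ (s k).

Lemma Z2lam : Z2 (lam s). Proof. move=> i j; exact: sZ. Qed.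
Lemma Z2nu : Z2 (nu s).
Proof.
move=> i j; rewrite /nu; apply: isZB; first by apply: isZM; [exact: isZn|exact: sZ].
case: i => [|i]; [exact: isZ0|exact: Z2lam].
Qed.

Lemma Z2F : Z2 (F_mu s).
Proof.
have m1 : isZ mu1 by exact: isZX.
have m2 : isZ mu2 by exact: isZX.
have m3 : isZ mu3 by exact: isZX.
have m4 : isZ mu4 by exact: isZX.
have m6 : isZ mu6 by exact: isZX.
have hl := Z2lam; have hn := Z2nu.
have hA : Z2 (cubA s).
  apply: Z2add; first exact: Z2one.
  apply: Z2add; first exact: Z2scale.
  apply: Z2add; apply: Z2scale => //; exact: Z2pow.
have hB : Z2 (cubB s).
  apply: Z2add; first exact: Z2scale.
  apply: Z2add; first by apply: Z2scale => //; exact: Z2pow.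
  apply: Z2add; first exact: Z2scale.
  apply: Z2add; first by apply: Z2scale; [apply: isZM => //; exact: isZn|exact: Z2mul].
  apply: Z2scale; first by apply: isZM => //; exact: isZn.
  apply: Z2mul => //; exact: Z2pow.
have ht : Z2 (t3 s).
  apply: Z2sub; first by apply: Z2opp; apply: Z2add; [exact: Z2T1|exact: Z2T2].
  apply: Z2mul => //; exact: Z2inv1.
have hs3 : Z2 (s3 s) by apply: Z2add => //; exact: Z2mul.
apply: Z2mul; first exact: Z2opp.
apply: Z2inv1; apply: Z2sub; first exact: Z2one.
apply: Z2add; exact: Z2scale.
Qed.
End FZ.

Definition H (a : ser EQ) n := forall k, (k <= n)%N -> isZ ((k`!)%:R * a k).

Lemma smul_H a b n : H a n -> H b n -> H (smul a b) n.
Proof.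
move=> ha hb k kn; rewrite /smul mulr_sumr; apply: isZsum => -[j hj] /=.
have jk : (j <= k)%N by rewrite -ltnS.
have e : (k`! = 'C(k, j) * (j`! * (k - j)`!))%N by rewrite bin_fact.
have -> : (k`!)%:R * (a j * b (k - j)%N) =
   'C(k, j)%:R * (((j`!)%:R * a j) * (((k - j)`!)%:R * b (k - j)%N)).
  rewrite e !natrM.
  rewrite -!mulrA; congr (_ * _); congr (_ * _).
  by rewrite mulrCA.

apply: isZM; first exact: isZn.
apply: isZM; first by apply: ha; exact: leq_trans jk kn.
apply: hb; exact: leq_trans (leq_subr _ _) kn.
Qed.

Lemma spow_H a m n : H a n -> H (spow a m) n.
Proof.
move=> ha; elim: m => [|m IH]; last by rewrite spowS; exact: smul_H.
move=> k _; apply: isZM; exact: isZn.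
Qed.

Theorem mainTheorem5 (s : ser EQ) (f : ser EQ) :
  is_tate_s s ->
  is_exponential (F_mu s) f ->
  forall k : nat, exists phi : EZ, (k`!)%:R * f k = EZ_to_EQ phi.
Proof.
move=> hs [f0 [f1 hf]].
have FZ := @Z2F s (@s_int s hs).
have key : forall i, (i.+1)%:R * f i.+1 =
    \sum_(a < i.+1) F_mu s a 1%N * spow f a i.
  move=> i; have := hf i 1%N.
  rewrite /ser_add_arg /s2comp addn1 binSn => ->.
  apply: eq_bigr => a _.
  rewrite big_ord_recr big_ord1 /=.
  have -> : (@sone EQ) 1%N = 0 by rewrite /sone.
  have -> : smul f sone 1%N = 1.
    rewrite /smul big_ord_recr big_ord1 /= f0 f1 mul0r add0r.
    by rewrite subnn /sone mulr1.
  by rewrite !mulr0 add0r mulr1.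
suff hH : forall n, H f n.
  by move=> k; apply: (hH k k).
elim=> [|n IH] k.
  rewrite leqn0 => /eqP ->; rewrite f0 mulr0; exact: isZ0.
rewrite leq_eqVlt => /orP [/eqP ->|]; last by rewrite ltnS; exact: IH.
rewrite factS natrM [_%:R * _%:R]mulrC -mulrA key mulr_sumr.
apply: isZsum => a.
rewrite mulrCA; apply: isZM; first exact: FZ.
exact: (@spow_H f a n IH n (leqnn n)).
Qed.
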